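(* There are two computable trees $P,Q\subseteq2^{<\omega}$ such that $[P]$ and $[Q]$ have the same order type (under the lexicographic order) but there is no computable order isomorphism $h^*:[P]\to[Q]$.
   Context: A tree is a subset of $2^{<\omega}$ closed under initial segments; it is computable if it is a computable set under a standard coding of strings by natural numbers. $[T]$ is the set of infinite binary sequences all of whose finite initial segments lie in $T$, ordered by $X<Y$ iff $X\ne Y$ and $X(n)<Y(n)$ at the first $n$ where they differ. A map $h^*:[P]\to[Q]$ is computable if there is an oracle Turing machine which, given oracle $X\in[P]$, computes $h^*(X)$. *)

(* Defs.v *)
(* World: plain MathComp (boot).  Oracle computability is formalised via
   partial mu-recursive functions relative to an oracle X : nat -> bool
   (Kleene's equivalent of oracle Turing machines). *)
From mathcomp Require Import all_boot.
Set Implicit Arguments.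
Unset Strict Implicit.
Unset Printing Implicit Defensive.

(* Standard coding of binary strings by naturals: s |-> (binary numeral "1s") - 1.
   This is a bijection seq bool -> nat. *)
Definition encode (s : seq bool) : nat :=
  (foldl (fun acc (b : bool) => acc.*2 + b) 1 s).-1.

Definition is_tree (T : pred (seq bool)) : Prop :=
  forall (s : seq bool) (n : nat), T s -> T (take n s).

Definition prefix (X : nat -> bool) (n : nat) : seq bool := mkseq X n.

Definition body (T : pred (seq bool)) (X : nat -> bool) : Prop :=
  forall n, T (prefix X n).

Definition lexlt (X Y : nat -> bool) : Prop :=
  exists n, (forall m, m < n -> X m = Y m) /\ X n = false /\ Y n = true.

Inductive rcode : Type :=
| RZero
| RSucc
| RProj (i : nat)
| ROracle
| RComp (f : rcode) (gs : seq rcode)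
| RPrec (f g : rcode)
| RMu (f : rcode).

Inductive eval (X : nat -> bool) : rcode -> seq nat -> nat -> Prop :=
| ev_zero xs : eval X RZero xs 0
| ev_succ xs : eval X RSucc xs (nth 0 xs 0).+1
| ev_proj i xs : eval X (RProj i) xs (nth 0 xs i)
| ev_oracle xs : eval X ROracle xs (nat_of_bool (X (nth 0 xs 0)))
| ev_comp f gs xs ys v :
    evals X gs xs ys -> eval X f ys v -> eval X (RComp f gs) xs v
| ev_prec0 f g xs v :
    eval X f xs v -> eval X (RPrec f g) (0 :: xs) v
| ev_precS f g n xs w v :
    eval X (RPrec f g) (n :: xs) w -> eval X g (n :: w :: xs) v ->
    eval X (RPrec f g) (n.+1 :: xs) v
| ev_mu f xs y :
    eval X f (y :: xs) 0 ->
    (forall z, z < y -> exists2 v, eval X f (z :: xs) v & v <> 0) ->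
    eval X (RMu f) xs y
with evals (X : nat -> bool) : seq rcode -> seq nat -> seq nat -> Prop :=
| evs_nil xs : evals X [::] xs [::]
| evs_cons g gs xs y ys :
    eval X g xs y -> evals X gs xs ys -> evals X (g :: gs) xs (y :: ys).

Definition computable_tree (T : pred (seq bool)) : Prop :=
  exists c : rcode, forall s : seq bool,
    eval (fun _ => false) c [:: encode s] (nat_of_bool (T s)).

Definition computable_map (P : pred (seq bool)) (h : (nat -> bool) -> (nat -> bool)) : Prop :=
  exists c : rcode, forall X, body P X ->
    forall n, eval X c [:: n] (nat_of_bool (h X n)).

Definition order_iso (P Q : pred (seq bool)) (h : (nat -> bool) -> (nat -> bool)) : Prop :=
  [/\ (forall X, body P X -> body Q (h X)),
      (forall X Y, body P X -> body P Y -> h X = h Y -> X = Y),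
      (forall Y, body Q Y -> exists2 X, body P X & h X = Y) &
      (forall X Y, body P X -> body P Y -> (lexlt X Y <-> lexlt (h X) (h Y)))].

(* Main.v *)
From Stdlib Require Import Classical ClassicalEpsilon FunctionalExtensionality.
Require Import Defs.
From mathcomp Require Import all_boot zify.
Set Implicit Arguments.
Unset Strict Implicit.
Unset Printing Implicit Defensive.

Inductive pr : Type :=
| PVar of nat
| PZero
| PSuc of pr
| PComp of pr & prs
| PRec of nat & pr & pr & pr
with prs : Type :=
| PNil
| PCons of pr & prs.

Scheme pr_mut := Induction for pr Sort Prop
with prs_mut := Induction for prs Sort Prop.

Fixpoint den (env : seq nat) (e : pr) {struct e} : nat :=
  match e with
  | PVar i => nth 0 env i
  | PZero => 0
  | PSuc a => (den env a).+1
  | PComp f args => den (dens env args) f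
  | PRec k a b n =>
      let env' := map (nth 0 env) (iota 0 k) in
      let fix go m := match m with 0 => den env' a | m'.+1 => den [:: m', go m' & env'] b end in
      go (den env n)
  end
with dens (env : seq nat) (l : prs) {struct l} : seq nat :=
  match l with PNil => [::] | PCons a r => den env a :: dens env r end.

Fixpoint cmp (e : pr) : rcode :=
  match e with
  | PVar i => RProj i
  | PZero => RZero
  | PSuc a => RComp RSucc [:: cmp a]
  | PComp f args => RComp (cmp f) (cmps args)
  | PRec k a b n => RComp (RPrec (cmp a) (cmp b)) (cmp n :: map RProj (iota 0 k))
  end
with cmps (l : prs) : seq rcode :=
  match l with PNil => [::] | PCons a r => cmp a :: cmps r end.

Fixpoint precf (fa : nat) (fb : nat -> nat -> nat) (m : nat) : nat :=
  match m with 0 => fa | m'.+1 => fb m' (precf fa fb m') end.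

Lemma den_PRec env k a b n :
  den env (PRec k a b n) =
  precf (den (map (nth 0 env) (iota 0 k)) a)
        (fun m r => den [:: m, r & map (nth 0 env) (iota 0 k)] b) (den env n).
Proof. by simpl; elim: (den env n) => //= m ->. Qed.

Lemma evals_proj X env s : evals X (map RProj s) env (map (nth 0 env) s).
Proof. elim: s => [|i s IH] /=; constructor => //; exact: ev_proj. Qed.

Lemma cmp_ok X e env : eval X (cmp e) env (den env e).
Proof.
move: e env.
apply (@pr_mut (fun (e : pr) => forall env, eval X (cmp e) env (den env e))
              (fun l => forall env, evals X (cmps l) env (dens env l))).
- by move=> i env; exact: ev_proj.
- by move=> env; exact: ev_zero.
- move=> a IH env /=.
  apply: ev_comp; first by constructor; [exact: IH| constructor].
  exact: ev_succ.
- move=> f IHf l IHl env /=. apply: ev_comp; [exact: IHl | exact: IHf].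
- move=> k a IHa b IHb n IHn env.
  rewrite den_PRec /=.
  apply: ev_comp; first by constructor; [exact: IHn | exact: evals_proj].
  elim: (den env n) => [|m IHm] /=; first by apply: ev_prec0; exact: IHa.
  apply: ev_precS; first exact: IHm. exact: IHb.
- by move=> env; constructor.
- move=> a IHa l IHl env /=; constructor; [exact: IHa | exact: IHl].
Qed.

Fixpoint tos (l : seq pr) : prs := if l is a :: r then PCons a (tos r) else PNil.
Definition app f l := locked (PComp f (tos l)).
Lemma den_app env f l : den env (app f l) = den (map (den env) l) f.
Proof. rewrite /app -lock /=; congr den; by elim: l => //= a l ->. Qed.

Notation v := PVar.
Ltac dapp := repeat (rewrite den_app /=).

Lemma precf_ind (fa : nat) fb (g : nat -> nat) :
  g 0 = fa -> (forall m, g m.+1 = fb m (g m)) -> forall n, precf fa fb n = g n.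
Proof. by move=> H0 HS; elim=> //= n ->. Qed.

Lemma nb_neq0 b : (nat_of_bool b != 0) = b. Proof. by case: b. Qed.
Lemma nb_eq0 b : (nat_of_bool b == 0) = ~~ b. Proof. by case: b. Qed.

Lemma map_nth_iota (l1 ps : seq nat) :
  map (nth 0 (l1 ++ ps)) (iota (size l1) (size ps)) = ps.
Proof.
elim: ps l1 => [|p ps IH] l1 //=.
rewrite nth_cat ltnn subnn /=; congr cons.
by have := IH (rcons l1 p); rewrite size_rcons -cats1 -catA.
Qed.

Lemma map_nth_iota0 (ps : seq nat) : map (nth 0 ps) (iota 0 (size ps)) = ps.
Proof. exact: (map_nth_iota [::]). Qed.

Definition ADD := locked (PRec 2 (v 1) (PSuc (v 1)) (v 0)).
Lemma den_ADD x y : den [:: x; y] ADD = x + y.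
Proof. rewrite /ADD -lock den_PRec /=; by elim: x => //= x ->. Qed.
Definition MUL := locked (PRec 2 PZero (app ADD [:: v 1; v 3]) (v 0)).
Lemma den_MUL x y : den [:: x; y] MUL = x * y.
Proof. rewrite /MUL -lock den_PRec /=; apply: (precf_ind (g := fun m => m * y)) => // m. by rewrite den_app /= den_ADD mulSn addnC. Qed.
Definition PRED := locked (PRec 1 PZero (v 0) (v 0)).
Lemma den_PRED x : den [:: x] PRED = x.-1.
Proof. by rewrite /PRED -lock den_PRec /=; case: x. Qed.
Definition SUB := locked (PRec 2 (v 0) (app PRED [:: v 1]) (v 1)).
Lemma den_SUB x y : den [:: x; y] SUB = x - y.
Proof. rewrite /SUB -lock den_PRec /=; apply: (precf_ind (g := fun m => x - m)) => [|m]; first by rewrite subn0. by rewrite den_app /= den_PRED subnS. Qed.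
Definition ISZ := locked (PRec 1 (PSuc PZero) PZero (v 0)).
Lemma den_ISZ x : den [:: x] ISZ = nat_of_bool (x == 0).
Proof. by rewrite /ISZ -lock den_PRec /=; case: x. Qed.
Definition NZ := locked (app ISZ [:: app ISZ [:: v 0]]).
Lemma den_NZ x : den [:: x] NZ = nat_of_bool (x != 0).
Proof. rewrite /NZ -lock; dapp; by rewrite !den_ISZ nb_eq0. Qed.
Definition LT := locked (app NZ [:: app SUB [:: v 1; v 0]]).
Lemma den_LT x y : den [:: x; y] LT = nat_of_bool (x < y).
Proof. by rewrite /LT -lock; dapp; rewrite den_SUB den_NZ subn_eq0 -ltnNge. Qed.
Definition EQ := locked (app ISZ [:: app ADD [:: app SUB [:: v 0; v 1]; app SUB [:: v 1; v 0]]]).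
Lemma den_EQ x y : den [:: x; y] EQ = nat_of_bool (x == y).
Proof. by rewrite /EQ -lock; dapp; rewrite !den_SUB den_ADD den_ISZ addn_eq0 !subn_eq0 -eqn_leq. Qed.
Definition AND := locked (app ISZ [:: app ADD [:: app ISZ [:: v 0]; app ISZ [:: v 1]]]).
Lemma den_AND x y : den [:: x; y] AND = nat_of_bool ((x != 0) && (y != 0)).
Proof. by rewrite /AND -lock; dapp; rewrite !den_ISZ den_ADD addn_eq0 !nb_eq0. Qed.
Definition OR := locked (app NZ [:: app ADD [:: v 0; v 1]]).
Lemma den_OR x y : den [:: x; y] OR = nat_of_bool ((x != 0) || (y != 0)).
Proof. by rewrite /OR -lock; dapp; rewrite den_ADD den_NZ addn_eq0 negb_and. Qed.
Definition ITE := locked (app ADD [:: app MUL [:: app NZ [:: v 0]; v 1]; app MUL [:: app ISZ [:: v 0]; v 2]]).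
Lemma den_ITE c a b : den [:: c; a; b] ITE = if c != 0 then a else b.
Proof. rewrite /ITE -lock; dapp; rewrite den_NZ den_ISZ !den_MUL den_ADD; by case: c => /=; rewrite ?mul1n ?mul0n ?addn0. Qed.

Definition BEX kp P := locked (PRec kp.+1 PZero (app OR [:: v 1; app P (v 0 :: map v (iota 3 kp))]) (v 0)).
Lemma den_BEX kp P n ps f : size ps = kp -> (forall i, den (i :: ps) P = nat_of_bool (f i)) ->
  den (n :: ps) (BEX kp P) = nat_of_bool (has f (iota 0 n)).
Proof.
move=> Hs Hf; rewrite /BEX -lock den_PRec.
have -> : map (nth 0 (n :: ps)) (iota 0 kp.+1) = n :: ps.
  by rewrite -Hs; exact: (map_nth_iota0 (n :: ps)).
apply: (precf_ind (g := fun m => nat_of_bool (has f (iota 0 m)))) => // m.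
rewrite -addn1 iotaD has_cat /= orbF add0n; rewrite den_app /= den_app /= -map_comp.
have -> : map (den [:: m, nat_of_bool (has f (iota 0 m)), n & ps] \o v) (iota 3 kp) = ps.
  by rewrite -Hs (map_nth_iota [:: _; _; _]).
by rewrite Hf den_OR !nb_neq0.
Qed.
Definition BALL kp P := locked (app ISZ [:: app (BEX kp (app ISZ [:: P])) (map v (iota 0 kp.+1))]).
Lemma den_BALL kp P n ps f : size ps = kp -> (forall i, den (i :: ps) P = nat_of_bool (f i)) ->
  den (n :: ps) (BALL kp P) = nat_of_bool (all f (iota 0 n)).
Proof.
move=> Hs Hf; rewrite /BALL -lock; dapp; rewrite -map_comp.
have -> : map (den (n :: ps) \o v) (iota 1 kp) = ps.
  by rewrite -Hs; exact: (map_nth_iota [:: n]).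
rewrite (@den_BEX kp _ n ps (fun i => ~~ f i)) //.
  by rewrite den_ISZ nb_eq0 -[all f _]negbK -has_predC.
by move=> i; rewrite den_app /= Hf den_ISZ nb_eq0.
Qed.
Definition FIND kp P := locked (PRec kp.+1 PZero
  (app ITE [:: app LT [:: v 1; v 0]; v 1;
     app ITE [:: app P (v 0 :: map v (iota 3 kp)); v 0; PSuc (v 0)]]) (v 0)).
Lemma den_FIND kp P n ps f : size ps = kp -> (forall i, den (i :: ps) P = nat_of_bool (f i)) ->
  den (n :: ps) (FIND kp P) = find f (iota 0 n).
Proof.
move=> Hs Hf; rewrite /FIND -lock den_PRec.
have -> : map (nth 0 (n :: ps)) (iota 0 kp.+1) = n :: ps.
  by rewrite -Hs; exact: (map_nth_iota0 (n :: ps)).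
apply: (precf_ind (g := fun m => find f (iota 0 m))) => // m.
rewrite -addn1 iotaD find_cat size_iota /= add0n.
dapp; rewrite -map_comp.
have -> : map (den [:: m, find f (iota 0 m), n & ps] \o v) (iota 3 kp) = ps.
  by rewrite -Hs (map_nth_iota [:: _; _; _]).
rewrite Hf den_LT !den_ITE nb_neq0.
have := has_find f (iota 0 m); rewrite size_iota => <-.
by case: (has f (iota 0 m)) => //=; case: (f m); rewrite ?addn0 ?addn1.
Qed.

Definition isqrt z := find (fun s => z < s.+1 * s.+1) (iota 0 z.+1).
Definition pi2 z := z - isqrt z * isqrt z.
Definition pi1 z := isqrt z - pi2 z.
Definition npair a b := (a + b) * (a + b) + b.
Definition ncons a l := (npair a l).+1.
Definition hd l := pi1 l.-1.
Definition tl l := pi2 l.-1.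
Definition itl l i := iter i tl l.
Definition nthc l i := hd (itl l i).
Definition lenc l := find (fun n => itl l n == 0) (iota 0 l.+1).
Definition decl l := mkseq (nthc l) (lenc l).
Definition cl (s : seq nat) := foldr ncons 0 s.

Lemma find_iota_spec (p : pred nat) n :
  let k := find p (iota 0 n) in k <= n /\ (k < n -> p k) /\ (forall i, i < k -> ~~ p i).
Proof.
move=> k; have Hs := find_size p (iota 0 n); rewrite size_iota in Hs.
split=> //; split.
  move=> Hk; have := nth_find 0 (_ : has p (iota 0 n)); rewrite nth_iota //.
  by apply; rewrite has_find size_iota.
move=> i Hi; have := before_find 0 Hi; rewrite nth_iota ?add0n; first by move=> ->.
exact: leq_trans Hi Hs.
Qed.

Lemma find_iota_eq (p : pred nat) n k :
  k < n -> p k -> (forall i, i < k -> ~~ p i) -> find p (iota 0 n) = k.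
Proof.
move=> Hkn Hpk Hlt; have [H1 [H2 H3]] := find_iota_spec p n.
case: (ltngtP (find p (iota 0 n)) k) => // H.
- by move: (Hlt _ H); rewrite H2 //; exact: ltn_trans H Hkn.
- by move: (H3 _ H); rewrite Hpk.
Qed.

Lemma isqrt_eq z s : s * s <= z < s.+1 * s.+1 -> isqrt z = s.
Proof.
move=> /andP [H1 H2]; apply: find_iota_eq => //.
  have : s <= s * s by case: s {H1 H2} => // s; rewrite leq_pmulr.
  by move=> H; rewrite ltnS; exact: leq_trans H H1.
by move=> i Hi; rewrite -leqNgt; apply: leq_trans H1; apply: leq_mul.
Qed.

Lemma pi2_pair a b : pi2 (npair a b) = b.
Proof.
rewrite /pi2 (@isqrt_eq _ (a + b)) /npair; first by rewrite addKn.
apply/andP; split; first exact: leq_addr. nia.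
Qed.

Lemma pi1_pair a b : pi1 (npair a b) = a.
Proof. rewrite /pi1 pi2_pair (@isqrt_eq _ (a + b)) ?addnK //; apply/andP; split; rewrite /npair; nia. Qed.

Lemma pi2_le z : pi2 z <= z. Proof. exact: leq_subr. Qed.
Lemma isqrt0 : isqrt 0 = 0. Proof. by []. Qed.
Lemma pi10 : pi1 0 = 0. Proof. by []. Qed.
Lemma pi20 : pi2 0 = 0. Proof. by []. Qed.
Lemma tl0 : tl 0 = 0. Proof. by []. Qed.
Lemma hd0 : hd 0 = 0. Proof. by []. Qed.
Lemma tl_lt l : 0 < l -> tl l < l.
Proof. by case: l => // l _; rewrite /tl /= ltnS pi2_le. Qed.
Lemma hd_ncons a l : hd (ncons a l) = a. Proof. exact: pi1_pair. Qed.
Lemma tl_ncons a l : tl (ncons a l) = l. Proof. exact: pi2_pair. Qed.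

Lemma itl0 i : itl 0 i = 0. Proof. by elim: i => //= i; rewrite /itl /= => ->. Qed.
Lemma itlS l i : itl l i.+1 = itl (tl l) i. Proof. by rewrite /itl iterSr. Qed.
Lemma itl_le l i : itl l i <= l - i.
Proof.
elim: i l => [|i IH] l; first by rewrite subn0.
rewrite itlS; case: (posnP l) => [->|Hl]; first by rewrite tl0 itl0.
apply: leq_trans (IH _) _; have := tl_lt Hl; lia.
Qed.
Lemma itl_after l i j : itl l i = 0 -> i <= j -> itl l j = 0.
Proof.
move=> H Hij; rewrite -(subnK Hij) /itl iterD -/(itl l i) H.
by elim: (j - i) => //= k ->.
Qed.

Lemma lenc_spec l :
  lenc l <= l /\ itl l (lenc l) = 0 /\ (forall i, i < lenc l -> itl l i != 0).
Proof.
have [H1 [H2 H3]] := find_iota_spec (fun n => itl l n == 0) l.+1.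
rewrite -/(lenc l) in H1 H2 H3.
have Hl : itl l l == 0 by have := itl_le l l; rewrite subnn leqn0.
have Hlt : lenc l < l.+1.
  rewrite ltnNge; apply/negP => Hge; have Hle : l < lenc l by [].
  by move: (H3 _ Hle); rewrite Hl.
split; first by rewrite -ltnS.
by split; [apply/eqP; exact: H2 | exact: H3].
Qed.

Lemma lenc_eq l n : itl l n = 0 -> (forall i, i < n -> itl l i != 0) -> lenc l = n.
Proof.
move=> Hn Hi; have [H1 [H2 H3]] := lenc_spec l.
case: (ltngtP (lenc l) n) => // H.
- by move: (Hi _ H); rewrite H2.
- by move: (H3 _ H); rewrite Hn.
Qed.

Lemma lenc0 : lenc 0 = 0. Proof. by []. Qed.

Lemma lenc_tl l : 0 < l -> lenc l = (lenc (tl l)).+1.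
Proof.
move=> Hl; have [H1 [H2 H3]] := lenc_spec (tl l).
apply: lenc_eq; first by rewrite itlS.
case=> [|i] Hi; first by rewrite /itl /= -lt0n.
by rewrite itlS; apply: H3.
Qed.

Lemma nthc_tl l i : nthc l i.+1 = nthc (tl l) i. Proof. by rewrite /nthc itlS. Qed.

Lemma decl_pos l : 0 < l -> decl l = hd l :: decl (tl l).
Proof.
move=> Hl; rewrite /decl lenc_tl // /mkseq -[iota 0 _.+1]/(0 :: iota 1 _) /=.
by rewrite -(addn0 1) iotaDl -map_comp; congr cons; apply: eq_map => i /=; rewrite add1n nthc_tl.
Qed.
Lemma decl0 : decl 0 = [::]. Proof. by []. Qed.

Lemma nthc_decl l i : nthc l i = nth 0 (decl l) i.
Proof.
have [H1 [H2 H3]] := lenc_spec l.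
case: (ltnP i (lenc l)) => Hi; first by rewrite /decl nth_mkseq.
by rewrite nth_default /decl ?size_mkseq // /nthc (itl_after H2 Hi).
Qed.

Lemma size_decl l : size (decl l) = lenc l. Proof. by rewrite size_mkseq. Qed.

Lemma decl_cl s : decl (cl s) = s.
Proof. by elim: s => //= a s IH; rewrite decl_pos // hd_ncons tl_ncons IH. Qed.
Lemma lenc_cl s : lenc (cl s) = size s. Proof. by rewrite -size_decl decl_cl. Qed.
Lemma nthc_cl s i : nthc (cl s) i = nth 0 s i. Proof. by rewrite nthc_decl decl_cl. Qed.
Lemma decl_ncons a l : decl (ncons a l) = a :: decl l.
Proof. by rewrite decl_pos // hd_ncons tl_ncons. Qed.

Lemma has_nthc (P : pred nat) L i : i <= lenc L ->
  has (fun j => P (nthc L j)) (iota 0 i) = has P (take i (decl L)).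
Proof.
move=> Hi; have -> : take i (decl L) = map (nthc L) (iota 0 i).
  apply: (@eq_from_nth _ 0); rewrite size_takel ?size_decl //; first by rewrite size_map size_iota.
  move=> j Hj.
  by rewrite nth_take // (nth_map 0) ?size_iota // nth_iota // -nthc_decl.
by rewrite has_map.
Qed.

Lemma all_nthc (P : pred nat) L :
  all (fun j => P (nthc L j)) (iota 0 (lenc L)) = all P (decl L).
Proof. by rewrite /decl /mkseq all_map. Qed.

Ltac dbase := rewrite ?den_ADD ?den_MUL ?den_PRED ?den_SUB ?den_ISZ ?den_NZ ?den_LT ?den_EQ
  ?den_AND ?den_OR ?den_ITE ?nb_neq0 ?nb_eq0.

Definition PSQ := locked (app LT [:: v 1; app MUL [:: PSuc (v 0); PSuc (v 0)]]).
Lemma den_PSQ s z : den [:: s; z] PSQ = nat_of_bool (z < s.+1 * s.+1).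
Proof. by rewrite /PSQ -lock; dapp; dbase. Qed.
Definition ISQRT := locked (app (FIND 1 PSQ) [:: PSuc (v 0); v 0]).
Lemma den_ISQRT z : den [:: z] ISQRT = isqrt z.
Proof. rewrite /ISQRT -lock; dapp. by apply: den_FIND => // i; rewrite den_PSQ. Qed.
Definition PI2 := locked (app SUB [:: v 0; app MUL [:: app ISQRT [:: v 0]; app ISQRT [:: v 0]]]).
Lemma den_PI2 z : den [:: z] PI2 = pi2 z.
Proof. by rewrite /PI2 -lock; dapp; rewrite !den_ISQRT; dbase. Qed.
Definition PI1 := locked (app SUB [:: app ISQRT [:: v 0]; app PI2 [:: v 0]]).
Lemma den_PI1 z : den [:: z] PI1 = pi1 z.
Proof. by rewrite /PI1 -lock; dapp; rewrite den_ISQRT den_PI2; dbase. Qed.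
Definition NPAIR := locked (app ADD [:: app MUL [:: app ADD [:: v 0; v 1]; app ADD [:: v 0; v 1]]; v 1]).
Lemma den_NPAIR a b : den [:: a; b] NPAIR = npair a b.
Proof. by rewrite /NPAIR -lock; dapp; dbase. Qed.
Definition NCONS := locked (PSuc (app NPAIR [:: v 0; v 1])).
Lemma den_NCONS a b : den [:: a; b] NCONS = ncons a b.
Proof. by rewrite /NCONS -lock /=; dapp; rewrite den_NPAIR. Qed.
Definition HD := locked (app PI1 [:: app PRED [:: v 0]]).
Lemma den_HD l : den [:: l] HD = hd l.
Proof. by rewrite /HD -lock; dapp; dbase; rewrite den_PI1. Qed.
Definition TL := locked (app PI2 [:: app PRED [:: v 0]]).
Lemma den_TL l : den [:: l] TL = tl l.
Proof. by rewrite /TL -lock; dapp; dbase; rewrite den_PI2. Qed.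
Definition ITL := locked (PRec 2 (v 0) (app TL [:: v 1]) (v 1)).
Lemma den_ITL l i : den [:: l; i] ITL = itl l i.
Proof.
rewrite /ITL -lock den_PRec /=; apply: (precf_ind (g := itl l)) => // m.
by rewrite den_app /= den_TL.
Qed.
Definition NTH := locked (app HD [:: app ITL [:: v 0; v 1]]).
Lemma den_NTH l i : den [:: l; i] NTH = nthc l i.
Proof. by rewrite /NTH -lock; dapp; rewrite den_ITL den_HD. Qed.
Definition PLEN := locked (app ISZ [:: app ITL [:: v 1; v 0]]).
Lemma den_PLEN n l : den [:: n; l] PLEN = nat_of_bool (itl l n == 0).
Proof. by rewrite /PLEN -lock; dapp; rewrite den_ITL den_ISZ. Qed.
Definition LEN := locked (app (FIND 1 PLEN) [:: PSuc (v 0); v 0]).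
Lemma den_LEN l : den [:: l] LEN = lenc l.
Proof. rewrite /LEN -lock; dapp. by apply: den_FIND => // i; rewrite den_PLEN. Qed.

Definition jc z := pi1 z.
Definition ja z := pi1 (pi2 z).
Definition jv z := pi2 (pi2 z).
Definition mkj c x w := npair c (npair x w).
Lemma jc_mkj c x w : jc (mkj c x w) = c. Proof. exact: pi1_pair. Qed.
Lemma ja_mkj c x w : ja (mkj c x w) = x. Proof. by rewrite /ja /mkj pi2_pair pi1_pair. Qed.
Lemma jv_mkj c x w : jv (mkj c x w) = w. Proof. by rewrite /jv /mkj !pi2_pair. Qed.

Definition JA := locked (app PI1 [:: app PI2 [:: v 0]]).
Lemma den_JA z : den [:: z] JA = ja z.
Proof. by rewrite /JA -lock; dapp; rewrite den_PI2 den_PI1. Qed.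
Definition JV := locked (app PI2 [:: app PI2 [:: v 0]]).
Lemma den_JV z : den [:: z] JV = jv z.
Proof. by rewrite /JV -lock; dapp; rewrite !den_PI2. Qed.
Definition MKJ := locked (app NPAIR [:: v 0; app NPAIR [:: v 1; v 2]]).
Lemma den_MKJ c x w : den [:: c; x; w] MKJ = mkj c x w.
Proof. by rewrite /MKJ -lock; dapp; rewrite !den_NPAIR. Qed.

Ltac dlist := rewrite ?den_ISQRT ?den_PI1 ?den_PI2 ?den_NPAIR ?den_NCONS ?den_HD ?den_TL ?den_ITL
  ?den_NTH ?den_LEN ?den_JA ?den_JV ?den_MKJ.
Ltac dall := dapp; do 3! (dbase; dlist).

Definition inprev L i w := has (fun j => nthc L j == w) (iota 0 i).
Definition p4b L i xs gs ys k := inprev L i (mkj (nthc gs k) xs (nthc ys k)).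
Definition p4 L i xs vv d j := let y := nthc L j in
  ((jc y == pi1 d) && (jv y == vv)) &&
  ((lenc (ja y) == lenc (pi2 d)) && all (p4b L i xs (pi2 d) (ja y)) (iota 0 (lenc (pi2 d)))).
Definition r4 L i xs vv d := has (p4 L i xs vv d) (iota 0 i).
Definition p5 L i c xs vv d j := let y := nthc L j in
  ((jc y == c) && (ja y == ncons (hd xs).-1 (tl xs))) &&
  inprev L i (mkj (pi2 d) (ncons (hd xs).-1 (ncons (jv y) (tl xs))) vv).
Definition r5 L i c xs vv d := (xs != 0) &&
  (if hd xs == 0 then inprev L i (mkj (pi1 d) (tl xs) vv) else has (p5 L i c xs vv d) (iota 0 i)).
Definition p6b L z xs d j := let y := nthc L j in
  ((jc y == d) && (ja y == ncons z xs)) && (jv y != 0).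
Definition p6 L i xs d z := has (p6b L z xs d) (iota 0 i).
Definition r6 L i xs vv d := inprev L i (mkj d (ncons vv xs) 0) && all (p6 L i xs d) (iota 0 vv).
Definition okz L i c xs vv tag d :=
  if tag == 0 then vv == 0 else
  if tag == 1 then vv == (nthc xs 0).+1 else
  if tag == 2 then vv == nthc xs d else
  if tag == 3 then vv == 0 else
  if tag == 4 then r4 L i xs vv d else
  if tag == 5 then r5 L i c xs vv d else
  if tag == 6 then r6 L i xs vv d else false.
Definition ok L i := let z := nthc L i in okz L i (jc z) (ja z) (jv z) (pi1 (jc z)) (pi2 (jc z)).
Definition valid L := all (ok L) (iota 0 (lenc L)).
Definition pg L e i := let y := nthc L i in (jc y == e) && (ja y == ncons e 0).
Definition good L e := has (pg L e) (iota 0 (lenc L)).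
Definition Kt t e := has (fun L => valid L && good L e) (iota 0 t).

Definition PIN := locked (app EQ [:: app NTH [:: v 1; v 0]; v 2]).
Lemma den_PIN j L w : den [:: j; L; w] PIN = nat_of_bool (nthc L j == w).
Proof. by rewrite /PIN -lock; dall. Qed.
Definition INPREV := locked (app (BEX 2 PIN) [:: v 1; v 0; v 2]).
Lemma den_INPREV L i w : den [:: L; i; w] INPREV = nat_of_bool (inprev L i w).
Proof. rewrite /INPREV -lock; dapp; apply: den_BEX => // j; exact: den_PIN. Qed.
Definition P4B := locked (app INPREV [:: v 1; v 2; app MKJ [:: app NTH [:: v 4; v 0]; v 3; app NTH [:: v 5; v 0]]]).
Lemma den_P4B k L i xs gs ys : den [:: k; L; i; xs; gs; ys] P4B = nat_of_bool (p4b L i xs gs ys k).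
Proof. by rewrite /P4B -lock; dall; rewrite den_INPREV. Qed.
Definition P4 := locked (let y := app NTH [:: v 1; v 0] in
  app AND [:: app AND [:: app EQ [:: app PI1 [:: y]; app PI1 [:: v 5]]; app EQ [:: app JV [:: y]; v 4]];
             app AND [:: app EQ [:: app LEN [:: app JA [:: y]]; app LEN [:: app PI2 [:: v 5]]];
                         app (BALL 5 P4B) [:: app LEN [:: app PI2 [:: v 5]]; v 1; v 2; v 3; app PI2 [:: v 5]; app JA [:: y]]]]).
Lemma den_P4 j L i xs vv d : den [:: j; L; i; xs; vv; d] P4 = nat_of_bool (p4 L i xs vv d j).
Proof.
rewrite /P4 -lock; dall.
rewrite (@den_BALL 5 _ _ _ (p4b L i xs (pi2 d) (ja (nthc L j)))) //; last by move=> k; exact: den_P4B.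
by dbase.
Qed.
Definition R4 := locked (app (BEX 5 P4) [:: v 1; v 0; v 1; v 3; v 4; v 6]).
Lemma den_R4 L i c xs vv tag d : den [:: L; i; c; xs; vv; tag; d] R4 = nat_of_bool (r4 L i xs vv d).
Proof. rewrite /R4 -lock; dapp; apply: den_BEX => // j; exact: den_P4. Qed.
Definition P5 := locked (let y := app NTH [:: v 1; v 0] in
  app AND [:: app AND [:: app EQ [:: app PI1 [:: y]; v 3];
                          app EQ [:: app JA [:: y]; app NCONS [:: app PRED [:: app HD [:: v 4]]; app TL [:: v 4]]]];
              app INPREV [:: v 1; v 2; app MKJ [:: app PI2 [:: v 6];
                 app NCONS [:: app PRED [:: app HD [:: v 4]]; app NCONS [:: app JV [:: y]; app TL [:: v 4]]]; v 5]]]).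
Lemma den_P5 j L i c xs vv d : den [:: j; L; i; c; xs; vv; d] P5 = nat_of_bool (p5 L i c xs vv d j).
Proof. by rewrite /P5 -lock; dall; rewrite den_INPREV; dbase. Qed.
Definition R5 := locked (app AND [:: app NZ [:: v 3];
  app ITE [:: app ISZ [:: app HD [:: v 3]];
              app INPREV [:: v 0; v 1; app MKJ [:: app PI1 [:: v 6]; app TL [:: v 3]; v 4]];
              app (BEX 6 P5) [:: v 1; v 0; v 1; v 2; v 3; v 4; v 6]]]).
Lemma den_R5 L i c xs vv tag d : den [:: L; i; c; xs; vv; tag; d] R5 = nat_of_bool (r5 L i c xs vv d).
Proof.
rewrite /R5 -lock; dall; rewrite den_INPREV.
rewrite (@den_BEX 6 _ _ _ (p5 L i c xs vv d)) //; last by move=> j; exact: den_P5.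
by rewrite /r5; case: (hd xs == 0); dbase.
Qed.
Definition P6B := locked (let y := app NTH [:: v 1; v 0] in
  app AND [:: app AND [:: app EQ [:: app PI1 [:: y]; v 4]; app EQ [:: app JA [:: y]; app NCONS [:: v 2; v 3]]];
              app NZ [:: app JV [:: y]]]).
Lemma den_P6B j L z xs d : den [:: j; L; z; xs; d] P6B = nat_of_bool (p6b L z xs d j).
Proof. by rewrite /P6B -lock; dall. Qed.
Definition P6 := locked (app (BEX 4 P6B) [:: v 2; v 1; v 0; v 3; v 4]).
Lemma den_P6 z L i xs d : den [:: z; L; i; xs; d] P6 = nat_of_bool (p6 L i xs d z).
Proof. rewrite /P6 -lock; dapp; apply: den_BEX => // j; exact: den_P6B. Qed.
Definition R6 := locked (app AND [:: app INPREV [:: v 0; v 1; app MKJ [:: v 6; app NCONS [:: v 4; v 3]; PZero]];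
                                   app (BALL 4 P6) [:: v 4; v 0; v 1; v 3; v 6]]).
Lemma den_R6 L i c xs vv tag d : den [:: L; i; c; xs; vv; tag; d] R6 = nat_of_bool (r6 L i xs vv d).
Proof.
rewrite /R6 -lock; dall; rewrite den_INPREV.
rewrite (@den_BALL 4 _ _ _ (p6 L i xs d)) //; last by move=> z; exact: den_P6.
by dbase.
Qed.
Definition K n := iter n PSuc PZero.
Lemma den_K env n : den env (K n) = n. Proof. by elim: n => //= n ->. Qed.
Definition OKZ := locked (
  app ITE [:: app EQ [:: v 5; K 0]; app ISZ [:: v 4];
  app ITE [:: app EQ [:: v 5; K 1]; app EQ [:: v 4; PSuc (app NTH [:: v 3; PZero])];
  app ITE [:: app EQ [:: v 5; K 2]; app EQ [:: v 4; app NTH [:: v 3; v 6]];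
  app ITE [:: app EQ [:: v 5; K 3]; app ISZ [:: v 4];
  app ITE [:: app EQ [:: v 5; K 4]; R4;
  app ITE [:: app EQ [:: v 5; K 5]; R5;
  app ITE [:: app EQ [:: v 5; K 6]; R6; PZero]]]]]]]).
Lemma den_OKZ L i c xs vv tag d : den [:: L; i; c; xs; vv; tag; d] OKZ = nat_of_bool (okz L i c xs vv tag d).
Proof.
rewrite /OKZ -lock; dapp; rewrite ?den_K den_R4 den_R5 den_R6; dall.
by rewrite /okz; do 7 (case: (_ == _) => //).
Qed.
Definition OK := locked (let z := app NTH [:: v 0; v 1] in
  app OKZ [:: v 0; v 1; app PI1 [:: z]; app JA [:: z]; app JV [:: z]; app PI1 [:: app PI1 [:: z]];
              app PI2 [:: app PI1 [:: z]]]).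
Lemma den_OK L i : den [:: L; i] OK = nat_of_bool (ok L i).
Proof. by rewrite /OK -lock; dall; rewrite den_OKZ. Qed.
Definition POK := locked (app OK [:: v 1; v 0]).
Lemma den_POK i L : den [:: i; L] POK = nat_of_bool (ok L i).
Proof. by rewrite /POK -lock; dapp; rewrite den_OK. Qed.
Definition VALID := locked (app (BALL 1 POK) [:: app LEN [:: v 0]; v 0]).
Lemma den_VALID L : den [:: L] VALID = nat_of_bool (valid L).
Proof. rewrite /VALID -lock; dall; apply: den_BALL => // i; exact: den_POK. Qed.
Definition PG := locked (let y := app NTH [:: v 1; v 0] in
  app AND [:: app EQ [:: app PI1 [:: y]; v 2]; app EQ [:: app JA [:: y]; app NCONS [:: v 2; PZero]]]).
Lemma den_PG i L e : den [:: i; L; e] PG = nat_of_bool (pg L e i).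
Proof. by rewrite /PG -lock; dall. Qed.
Definition GOOD := locked (app (BEX 2 PG) [:: app LEN [:: v 0]; v 0; v 1]).
Lemma den_GOOD L e : den [:: L; e] GOOD = nat_of_bool (good L e).
Proof. rewrite /GOOD -lock; dall; apply: den_BEX => // i; exact: den_PG. Qed.
Definition PK := locked (app AND [:: app VALID [:: v 0]; app GOOD [:: v 0; v 1]]).
Lemma den_PK L e : den [:: L; e] PK = nat_of_bool (valid L && good L e).
Proof. by rewrite /PK -lock; dapp; rewrite den_VALID den_GOOD; dbase. Qed.
Definition KT := locked (app (BEX 1 PK) [:: v 0; v 1]).
Lemma den_KT t e : den [:: t; e] KT = nat_of_bool (Kt t e).
Proof. rewrite /KT -lock; dapp; apply: den_BEX => // L; exact: den_PK. Qed.

Fixpoint enc (r : rcode) : nat :=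
  match r with
  | RZero => npair 0 0
  | RSucc => npair 1 0
  | RProj i => npair 2 i
  | ROracle => npair 3 0
  | RComp f gs => npair 4 (npair (enc f) (cl (map enc gs)))
  | RPrec f g => npair 5 (npair (enc f) (enc g))
  | RMu f => npair 6 (enc f)
  end.

Definition q4 (prev : seq nat) xs vv d y :=
  ((jc y == pi1 d) && (jv y == vv)) &&
  ((lenc (ja y) == lenc (pi2 d)) &&
   all (fun k => mkj (nthc (pi2 d) k) xs (nthc (ja y) k) \in prev) (iota 0 (lenc (pi2 d)))).
Definition s4 prev xs vv d := has (q4 prev xs vv d) prev.
Definition q5 (prev : seq nat) c xs vv d y :=
  ((jc y == c) && (ja y == ncons (hd xs).-1 (tl xs))) &&
  (mkj (pi2 d) (ncons (hd xs).-1 (ncons (jv y) (tl xs))) vv \in prev).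
Definition s5 prev c xs vv d := (xs != 0) &&
  (if hd xs == 0 then mkj (pi1 d) (tl xs) vv \in prev else has (q5 prev c xs vv d) prev).
Definition q6 xs d z y := ((jc y == d) && (ja y == ncons z xs)) && (jv y != 0).
Definition s6 (prev : seq nat) xs vv d :=
  (mkj d (ncons vv xs) 0 \in prev) && all (fun z => has (q6 xs d z) prev) (iota 0 vv).
Definition okzp prev c xs vv tag d :=
  if tag == 0 then vv == 0 else
  if tag == 1 then vv == (nthc xs 0).+1 else
  if tag == 2 then vv == nthc xs d else
  if tag == 3 then vv == 0 else
  if tag == 4 then s4 prev xs vv d else
  if tag == 5 then s5 prev c xs vv d else
  if tag == 6 then s6 prev xs vv d else false.
Definition okp prev z := okzp prev (jc z) (ja z) (jv z) (pi1 (jc z)) (pi2 (jc z)).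
Definition validp (s : seq nat) := all (fun i => okp (take i s) (nth 0 s i)) (iota 0 (size s)).
Definition goodp (s : seq nat) e := has (fun y => (jc y == e) && (ja y == ncons e 0)) s.

Section Eq.
Variables (L i : nat).
Hypothesis Hi : i <= lenc L.
Let prev := take i (decl L).
Lemma inprev_eq w : inprev L i w = (w \in prev).
Proof. by rewrite /inprev (@has_nthc (fun y => y == w) L i Hi) has_pred1. Qed.
Lemma r4_eq xs vv d : r4 L i xs vv d = s4 prev xs vv d.
Proof.
rewrite /r4 /s4 -(@has_nthc (q4 prev xs vv d) L i Hi); apply: eq_has => j.
rewrite /p4 /q4; congr (_ && (_ && _)); apply: eq_all => k; by rewrite /p4b inprev_eq.
Qed.
Lemma r5_eq c xs vv d : r5 L i c xs vv d = s5 prev c xs vv d.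
Proof.
rewrite /r5 /s5 inprev_eq; congr (_ && _); case: (_ == 0) => //.
rewrite -(@has_nthc (q5 prev c xs vv d) L i Hi); apply: eq_has => j.
by rewrite /p5 /q5 inprev_eq.
Qed.
Lemma r6_eq xs vv d : r6 L i xs vv d = s6 prev xs vv d.
Proof.
rewrite /r6 /s6 inprev_eq; congr (_ && _); apply: eq_all => z.
by rewrite /p6 -(@has_nthc (q6 xs d z) L i Hi).
Qed.
Lemma ok_okp : ok L i = okp prev (nthc L i).
Proof. by rewrite /ok /okz /okp /okzp r4_eq r5_eq r6_eq. Qed.
End Eq.

Lemma valid_validp L : valid L = validp (decl L).
Proof.
rewrite /valid /validp size_decl; apply: eq_in_all => i; rewrite mem_iota add0n => /andP [_ Hi].
by rewrite ok_okp ?(ltnW Hi) // nthc_decl.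
Qed.

Lemma good_goodp L e : good L e = goodp (decl L) e.
Proof.
have := @has_nthc (fun y => (jc y == e) && (ja y == ncons e 0)) L _ (leqnn _).
by rewrite take_oversize ?size_decl // => <-.
Qed.

Lemma Kt_eq t e : Kt t e = has (fun L => validp (decl L) && goodp (decl L) e) (iota 0 t).
Proof. by apply: eq_has => L; rewrite valid_validp good_goodp. Qed.

Lemma validp_rcons s z : validp (rcons s z) = validp s && okp s z.
Proof.
rewrite /validp size_rcons -addn1 iotaD all_cat /= andbT add0n.
rewrite nth_rcons ltnn eqxx -cats1 take_size_cat //; congr andb.
apply: eq_in_all => i; rewrite mem_iota add0n => /andP [_ Hi].
by rewrite nth_cat Hi takel_cat // ltnW.
Qed.

Lemma okp_mono prev prev' z : {subset prev <= prev'} -> okp prev z -> okp prev' z.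
Proof.
move=> Hs; rewrite /okp /okzp.
do 4 (case: (_ == _) => //).
- case: (_ == _) => //. case/hasP => y Hy Hq; apply/hasP; exists y; first exact: Hs.
  move: Hq; rewrite /q4 => /andP [-> /andP [-> Ha]] /=; apply/allP => k Hk.
  by apply: Hs; move/allP: Ha; apply.
- case: (_ == _) => //.
  rewrite /s5; case/andP => -> /=; case: (_ == 0); first exact: Hs.
  case/hasP => y Hy Hq; apply/hasP; exists y; first exact: Hs.
  by move: Hq; rewrite /q5 => /andP [-> Hm]; apply: Hs.
- case: (_ == _) => //.
  rewrite /s6 => /andP [Hm Ha]; rewrite Hs //=; apply/allP => z' Hz'.
  case/hasP: (allP Ha z' Hz') => y Hy Hq; apply/hasP; exists y => //; exact: Hs.
Qed.

Lemma validp_cat s1 s2 : validp s1 -> validp s2 -> validp (s1 ++ s2).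
Proof.
move=> H1; elim/last_ind: s2 => [|s2 z IH]; first by rewrite cats0.
rewrite -rcons_cat !validp_rcons => /andP [H2 Hz]; rewrite IH //=.
by apply: okp_mono Hz => y; rewrite mem_cat orbC => ->.
Qed.

Definition X0 : nat -> bool := fun _ => false.
Definition Sem z := forall r, enc r = jc z -> eval X0 r (decl (ja z)) (jv z).

Lemma evals_nth X gs xs ys : size ys = size gs ->
  (forall k, k < size gs -> eval X (nth RZero gs k) xs (nth 0 ys k)) -> evals X gs xs ys.
Proof.
elim: gs ys => [|g gs IH] [|y ys] //= Hs Hk; first by constructor.
constructor; first exact: (Hk 0).
apply: IH; first by case: Hs.
by move=> k Hk'; exact: (Hk k.+1).
Qed.

Lemma okp_sound prev z : okp prev z -> (forall y, y \in prev -> Sem y) -> Sem z.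
Proof.
move=> H Hp r Er; move: H; rewrite /okp /okzp -Er.
case: r Er => [||i||f gs|f g|f] Er; rewrite /enc -/enc pi1_pair pi2_pair /=.
- by move/eqP=> ->; constructor.
- by move/eqP=> ->; rewrite nthc_decl; constructor.
- by move/eqP=> ->; rewrite nthc_decl; constructor.
- by move/eqP=> ->; exact: (ev_oracle X0 (decl (ja z))).
- rewrite /s4 => /hasP [y Hy /andP [/andP [/eqP Hf /eqP Hv] /andP [/eqP Hl /allP Ha]]].
  move: Hf Hl Ha; rewrite pi1_pair pi2_pair lenc_cl size_map => Hf Hl Ha.
  apply: (@ev_comp _ _ _ _ (decl (ja y))); last by rewrite -Hv; apply: Hp => //; rewrite Hf.
  apply: evals_nth; first by rewrite size_decl.
  move=> k Hk; have Hm := Ha k; rewrite mem_iota add0n Hk /= in Hm.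
  have := Hp _ (Hm isT) (nth RZero gs k); rewrite jc_mkj ja_mkj jv_mkj nthc_cl (nth_map RZero) //.
  by rewrite nthc_decl; apply.
- rewrite /s5 pi1_pair => /andP [Hx].
  have Hd : decl (ja z) = hd (ja z) :: decl (tl (ja z)) by apply: decl_pos; rewrite lt0n.
  rewrite Hd.
  case: eqP => [H0|/eqP H0].
    move=> Hm; rewrite H0; apply: ev_prec0.
    by have := Hp _ Hm f; rewrite jc_mkj ja_mkj jv_mkj; apply.
  case/hasP => y Hy; rewrite /q5 pi2_pair => /andP [/andP [/eqP Hc /eqP Ha] Hm].
  have Hy' := Hp _ Hy (RPrec f g) (esym Hc); rewrite Ha decl_ncons in Hy'.
  have Hg := Hp _ Hm g; rewrite jc_mkj ja_mkj jv_mkj !decl_ncons in Hg.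
  have H0' : 0 < hd (ja z) by rewrite lt0n.
  rewrite -(prednK H0'); apply: ev_precS; [exact: Hy' | exact: Hg].
- rewrite /s6 => /andP [Hm /allP Ha].
  apply: ev_mu; first by have := Hp _ Hm f; rewrite jc_mkj ja_mkj jv_mkj decl_ncons; apply.
  move=> z' Hz'; have := Ha z'; rewrite mem_iota add0n Hz' => /(_ isT) /hasP [y Hy].
  case/andP => [/andP [/eqP Hc /eqP Hya] Hv]; exists (jv y); last exact/eqP.
  by have := Hp _ Hy f; rewrite Hya decl_ncons; apply.
Qed.

Lemma validp_sound s : validp s -> forall y, y \in s -> Sem y.
Proof.
elim/last_ind: s => [|s z IH] //; rewrite validp_rcons => /andP [Hs Hz] y.
rewrite -cats1 mem_cat => /orP [Hy|]; first exact: IH.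
by rewrite inE => /eqP ->; apply: (okp_sound Hz (IH Hs)).
Qed.

Lemma combine (P : nat -> seq nat -> Prop) n :
  (forall z s s', P z s -> {subset s <= s'} -> P z s') ->
  (forall z, z < n -> exists s, validp s /\ P z s) ->
  exists s, validp s /\ forall z, z < n -> P z s.
Proof.
move=> Hm; elim: n => [|n IH] H; first by exists [::].
case: IH => [z Hz|s [Hs HP]]; first by apply: H; exact: ltnW.
case: (H n (ltnSn n)) => s' [Hs' HP'].
exists (s ++ s'); split; first exact: validp_cat.
move=> z; rewrite ltnS leq_eqVlt => /orP [/eqP ->|Hz].
  by apply: Hm HP' _ => y; rewrite mem_cat orbC => ->.
by apply: Hm (HP _ Hz) _ => y; rewrite mem_cat => ->.
Qed.

Lemma add_entry s z : validp s -> okp s z -> validp (rcons s z) /\ z \in rcons s z.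
Proof. by move=> Hs Hz; rewrite validp_rcons Hs Hz mem_rcons inE eqxx. Qed.

Lemma okp_simpl prev c xs vv :
  okp prev (mkj c xs vv) = okzp prev c xs vv (pi1 c) (pi2 c).
Proof. by rewrite /okp jc_mkj ja_mkj jv_mkj. Qed.

Lemma single_entry z : okp [::] z -> exists s, validp s /\ z \in s.
Proof. by move=> H; exists (rcons [::] z); apply: add_entry. Qed.

Lemma subcat1 (s1 s2 : seq nat) : {subset s1 <= s1 ++ s2}.
Proof. by move=> y Hy; rewrite mem_cat Hy. Qed.
Lemma subcat2 (s1 s2 : seq nat) : {subset s2 <= s1 ++ s2}.
Proof. by move=> y Hy; rewrite mem_cat Hy orbT. Qed.

Lemma comp_eval : forall r xs v, eval X0 r xs v -> exists s, validp s /\ mkj (enc r) (cl xs) v \in s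
with comp_evals : forall gs xs ys, evals X0 gs xs ys -> exists s, validp s /\ size ys = size gs /\
  forall k, k < size gs -> mkj (enc (nth RZero gs k)) (cl xs) (nth 0 ys k) \in s.
Proof.
- move=> r xs v H; destruct H.
  + by apply: single_entry; rewrite okp_simpl pi1_pair.
  + by apply: single_entry; rewrite okp_simpl pi1_pair /okzp /= nthc_cl.
  + by apply: single_entry; rewrite okp_simpl pi1_pair pi2_pair /okzp /= nthc_cl.
  + by apply: single_entry; rewrite okp_simpl pi1_pair.
  + case: (comp_evals _ _ _ H) => s1 [Hs1 [Hsz Hm1]].
    case: (comp_eval _ _ _ H0) => s2 [Hs2 Hm2].
    set z := mkj _ _ _.
    have Hv := validp_cat Hs1 Hs2.
    have Hok : okp (s1 ++ s2) z.
      rewrite /z okp_simpl /= pi1_pair pi2_pair /okzp /= /s4.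
      apply/hasP; exists (mkj (enc f) (cl ys) v); first exact: subcat2.
      rewrite /q4 jc_mkj jv_mkj ja_mkj !pi1_pair !pi2_pair !eqxx /= lenc_cl lenc_cl size_map Hsz eqxx /=.
      apply/allP => k; rewrite mem_iota add0n /= => Hk.
      rewrite nthc_cl nthc_cl (nth_map RZero) //; apply: subcat1; exact: Hm1.
    exists (rcons (s1 ++ s2) z); exact: add_entry.
  + case: (comp_eval _ _ _ H) => s1 [Hs1 Hm1].
    set z := mkj _ _ _.
    have Hok : okp s1 z.
      by rewrite /z okp_simpl /= pi1_pair pi2_pair /okzp /= /s5 /= hd_ncons tl_ncons pi1_pair.
    exists (rcons s1 z); exact: add_entry.
  + case: (comp_eval _ _ _ H) => s1 [Hs1 Hm1].
    case: (comp_eval _ _ _ H0) => s2 [Hs2 Hm2].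
    set z := mkj _ _ _.
    have Hv := validp_cat Hs1 Hs2.
    have Hok : okp (s1 ++ s2) z.
      rewrite /z okp_simpl /= pi1_pair pi2_pair /okzp /= /s5 /= hd_ncons tl_ncons /=.
      apply/hasP; exists (mkj (npair 5 (npair (enc f) (enc g))) (cl (n :: xs)) w); first exact: subcat1.
      rewrite /q5 jc_mkj ja_mkj jv_mkj pi2_pair !eqxx /= hd_ncons tl_ncons eqxx /=; apply: subcat2; exact: Hm2.
    exists (rcons (s1 ++ s2) z); exact: add_entry.
  + case: (comp_eval _ _ _ H) => s1 [Hs1 Hm1].
    have Hall : forall z, z < y -> exists s, validp s /\
        has (q6 (cl xs) (enc f) z) s.
      move=> z Hz; case: (H0 z Hz) => w Hw Hw0.
      case: (comp_eval _ _ _ Hw) => s [Hs Hm]; exists s; split => //.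
      apply/hasP; exists (mkj (enc f) (cl (z :: xs)) w) => //.
      by rewrite /q6 jc_mkj ja_mkj jv_mkj !eqxx /=; apply/eqP.
    case: (@combine (fun z s => has (q6 (cl xs) (enc f) z) s) y) => //.
      move=> z s s' /hasP [u Hu Hq] Hsub; apply/hasP; exists u => //; exact: Hsub.
    move=> s2 [Hs2 Hm2].
    set z := mkj _ _ _.
    have Hv := validp_cat Hs1 Hs2.
    have Hok : okp (s1 ++ s2) z.
      rewrite /z okp_simpl /= pi1_pair pi2_pair /okzp /= /s6.
      rewrite subcat1 //=; apply/allP => z'; rewrite mem_iota add0n /= => Hz'.
      case/hasP: (Hm2 _ Hz') => u Hu Hq; apply/hasP; exists u => //; exact: subcat2.
    exists (rcons (s1 ++ s2) z); exact: add_entry.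
- move=> gs xs ys H; destruct H.
  + by exists [::].
  + case: (comp_eval _ _ _ H) => s1 [Hs1 Hm1].
    case: (comp_evals _ _ _ H0) => s2 [Hs2 [Hsz Hm2]].
    exists (s1 ++ s2); split; first exact: validp_cat.
    split; first by rewrite /= Hsz.
    case=> [|k] Hk /=; first exact: subcat1.
    apply: subcat2; exact: Hm2.
Qed.

Lemma Kt_sound t e : Kt t e -> forall r, enc r = e -> exists v, eval X0 r [:: e] v.
Proof.
rewrite Kt_eq => /hasP [L _ /andP [Hv /hasP [y Hy /andP [/eqP Hc /eqP Ha]]]] r Er.
exists (jv y); have := validp_sound Hv Hy (etrans Er (esym Hc)); by rewrite Ha decl_ncons decl0 -Er.
Qed.

Lemma Kt_complete r v : eval X0 r [:: enc r] v -> exists t, Kt t (enc r).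
Proof.
move/comp_eval => [s [Hs Hm]]; exists (cl s).+1; rewrite Kt_eq; apply/hasP.
exists (cl s); first by rewrite mem_iota add0n leq0n ltnSn.
rewrite decl_cl Hs /=; apply/hasP; exists (mkj (enc r) (cl [:: enc r]) v) => //.
by rewrite jc_mkj ja_mkj !eqxx.
Qed.

Lemma Kt_mono t t' e : t <= t' -> Kt t e -> Kt t' e.
Proof.
move=> Ht /hasP [L HL H]; apply/hasP; exists L => //.
by move: HL; rewrite !mem_iota !add0n /= => HL; apply: leq_trans HL Ht.
Qed.

Definition bstep (acc : nat) (b : bool) := acc.*2 + b.
Definition num (s : seq bool) := foldl bstep 1 s.

Lemma foldl_acc s acc : foldl bstep acc s = acc * 2 ^ size s + foldl bstep 0 s.
Proof.
elim: s acc => [|b s IH] acc /=; first by rewrite muln1 addn0.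
rewrite IH (IH (bstep 0 b)) /bstep expnS; case: b => /=; rewrite -!muln2; nia.
Qed.

Lemma foldl0_lt s : foldl bstep 0 s < 2 ^ size s.
Proof.
elim/last_ind: s => [|s b IH] //=.
rewrite -cats1 foldl_cat /= size_cat /= addn1 expnS; move: IH.
set x := foldl bstep 0 s; rewrite /bstep; case: b => /=; rewrite -!muln2; lia.
Qed.

Lemma num_bounds s : 2 ^ size s <= num s < 2 ^ (size s).+1.
Proof.
rewrite /num foldl_acc mul1n expnS; have := foldl0_lt s; lia.
Qed.

Lemma encode_num s : encode s = (num s).-1. Proof. by []. Qed.
Lemma num_pos s : 0 < num s.
Proof. have /andP [H _] := num_bounds s; apply: leq_trans H; by rewrite expn_gt0. Qed.

Lemma num_split s p : p <= size s -> num s = num (take p s) * 2 ^ (size s - p) + foldl bstep 0 (drop p s).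
Proof.
move=> Hp; rewrite /num -{1}(cat_take_drop p s) foldl_cat foldl_acc size_drop //.
Qed.

Lemma bit_num s p : p < size s -> nth false s p = odd (num s %/ 2 ^ (size s - p.+1)).
Proof.
move=> Hp; rewrite (num_split Hp) divnMDl ?expn_gt0 // divn_small ?addn0; last first.
  by have := foldl0_lt (drop p.+1 s); rewrite size_drop.
rewrite (take_nth false Hp) /num -cats1 foldl_cat /= /bstep oddD odd_double /=.
by case: (nth false s p).
Qed.

Definition POW2 := locked (PRec 1 (PSuc PZero) (app ADD [:: v 1; v 1]) (v 0)).
Lemma den_POW2 n : den [:: n] POW2 = 2 ^ n.
Proof.
rewrite /POW2 -lock den_PRec /=; apply: (precf_ind (g := fun m => 2 ^ m)) => // m.
by rewrite den_app /= den_ADD expnS; lia.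
Qed.
Definition PDIV := locked (app LT [:: v 1; app MUL [:: PSuc (v 0); v 2]]).
Lemma den_PDIV q a b : den [:: q; a; b] PDIV = nat_of_bool (a < q.+1 * b).
Proof. by rewrite /PDIV -lock; dall. Qed.
Definition DIV := locked (app (FIND 2 PDIV) [:: PSuc (v 0); v 0; v 1]).
Lemma den_DIV a b : 0 < b -> den [:: a; b] DIV = a %/ b.
Proof.
move=> Hb; rewrite /DIV -lock; dapp.
rewrite (@den_FIND 2 _ _ _ (fun q => a < q.+1 * b)) //; last by move=> i; rewrite den_PDIV.
apply: find_iota_eq => /=.
- by rewrite ltnS leq_div.
- exact: ltn_ceil.
- move=> i Hi; rewrite -leqNgt; apply: leq_trans (leq_divM a b); exact: leq_mul.
Qed.
Definition ODD := locked (app NZ [:: app SUB [:: v 0; app MUL [:: app DIV [:: v 0; K 2]; K 2]]]).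
Lemma den_ODD x : den [:: x] ODD = nat_of_bool (odd x).
Proof.
rewrite /ODD -lock; dapp; rewrite ?den_K den_DIV // den_MUL den_SUB den_NZ.
rewrite -modn2 {1}(divn_eq x 2) addKn. have := ltn_pmod x (isT : 0 < 2). by case: (x %% 2) => [|[|]].
Qed.
Definition PLG := locked (app LT [:: v 1; app POW2 [:: PSuc (v 0)]]).
Lemma den_PLG l m : den [:: l; m] PLG = nat_of_bool (m < 2 ^ l.+1).
Proof. by rewrite /PLG -lock; dapp; rewrite den_POW2 den_LT. Qed.
Definition LG := locked (app (FIND 1 PLG) [:: v 0; v 0]).
Lemma den_LG s : den [:: num s] LG = size s.
Proof.
rewrite /LG -lock; dapp.
rewrite (@den_FIND 1 _ _ _ (fun l => num s < 2 ^ l.+1)) //; last by move=> i; rewrite den_PLG.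
have := num_bounds s => /andP [H1 H2].
apply: find_iota_eq => //.
- apply: leq_trans H1; exact: ltn_expl.
- move=> i Hi; rewrite -leqNgt; apply: leq_trans H1; exact: leq_pexp2l.
Qed.

Definition Qt (s : seq bool) :=
  all (fun e => (e.*2 < size s) ==> (nth false s e.*2 || ~~ Kt (size s) e)) (iota 0 (size s)).

Definition PQ := locked (app OR [:: app ISZ [:: app LT [:: app ADD [:: v 0; v 0]; v 2]];
  app OR [:: app ODD [:: app DIV [:: v 1; app POW2 [:: app SUB [:: app SUB [:: v 2; K 1]; app ADD [:: v 0; v 0]]]]];
             app ISZ [:: app KT [:: v 2; v 0]]]]).
Lemma den_PQ e N L : den [:: e; N; L] PQ =
  nat_of_bool (~~ (e + e < L) || (odd (N %/ 2 ^ (L - 1 - (e + e))) || ~~ Kt L e)).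
Proof.
rewrite /PQ -lock; dapp; rewrite ?den_K !den_ADD !den_SUB den_POW2 den_DIV ?expn_gt0 //.
by rewrite den_ODD den_KT den_LT; dbase.
Qed.
Definition QT := locked (app (BALL 2 PQ) [:: app LG [:: PSuc (v 0)]; PSuc (v 0); app LG [:: PSuc (v 0)]]).
Lemma den_QT s : den [:: encode s] QT = nat_of_bool (Qt s).
Proof.
rewrite /QT -lock; dapp.
have -> : (encode s).+1 = num s by rewrite encode_num prednK // num_pos.
rewrite den_LG.
rewrite (@den_BALL 2 _ _ _ (fun e => ~~ (e + e < size s) || (odd (num s %/ 2 ^ (size s - 1 - (e + e))) || ~~ Kt (size s) e))) //; last by move=> i; rewrite den_PQ.
congr nat_of_bool; apply: eq_all => e; rewrite -addnn implybE.
case: ltnP => //= He; rewrite bit_num //; congr (odd (_ %/ 2 ^ _) || _); lia.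
Qed.

Definition Kp e := exists t, Kt t e.
Definition kb e : bool := if excluded_middle_informative (Kp e) then true else false.
Lemma kbP e : kb e = true <-> Kp e.
Proof. by rewrite /kb; case: excluded_middle_informative. Qed.

Lemma Qt_tree : is_tree Qt.
Proof.
move=> s n /allP H; apply/allP => e; rewrite mem_iota add0n /= => He.
apply/implyP => H2.
have Hs : size (take n s) <= size s by rewrite size_take_min geq_minr.
have Hn : e.*2 < n by move: H2; rewrite size_take_min; lia.
have He' : e < size s by apply: leq_trans He Hs.
have := H e; rewrite mem_iota add0n He' => /(_ isT) /implyP.
move=> /(_ (leq_trans H2 Hs)); rewrite nth_take //.
case/orP => [->|HK] //; apply/orP; right; apply/negP => HK'; move/negP: HK; apply.
exact: Kt_mono HK'.
Qed.

Lemma body_Qt Z : body Qt Z <-> (forall e, Kp e -> Z e.*2 = true).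
Proof.
split.
- move=> HB e [t Ht]; set n := maxn t e.*2.+1.
  have := HB n; rewrite /Qt /prefix size_mkseq => /allP /(_ e).
  have He : e < n by rewrite /n leq_max; apply/orP; right; rewrite ltnS -addnn leq_addr.
  rewrite mem_iota add0n He => /(_ isT) /implyP.
  have H2 : e.*2 < n by rewrite /n leq_max ltnSn orbT.
  move=> /(_ H2); rewrite nth_mkseq //; case: (Z _) => //=.
  by rewrite (Kt_mono _ Ht) // leq_maxl.
- move=> HZ n; rewrite /Qt /prefix size_mkseq; apply/allP => e _; apply/implyP => H2.
  rewrite nth_mkseq //; case E: (Z _) => //=; apply/negP => HK.
  by rewrite HZ in E; last by exists n.
Qed.

Definition free p := odd p || ~~ kb p./2.
Definition rank p := count free (iota 0 p).
Lemma rankS p : rank p.+1 = rank p + free p.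
Proof. by rewrite /rank -addn1 iotaD count_cat /= addn0. Qed.
Lemma rank_le p q : p <= q -> rank p <= rank q.
Proof. move/subnK <-; elim: (q - p) => //= k IH; rewrite addSn rankS; lia. Qed.
Lemma rank_lt p q : p < q -> free p -> rank p < rank q.
Proof. by move=> Hpq Hf; apply: leq_trans (rank_le Hpq); rewrite rankS Hf addn1. Qed.
Lemma rank_inj p q : free p -> free q -> rank p = rank q -> p = q.
Proof.
move=> Hp Hq E; case: (ltngtP p q) => // H.
- by move: (rank_lt H Hp); rewrite E ltnn.
- by move: (rank_lt H Hq); rewrite E ltnn.
Qed.
Lemma rank_big n : n < rank (n.*2.+2).
Proof.
elim: n => [|n IH]; first by rewrite !rankS /free /=; lia.
rewrite doubleS (rankS n.*2.+3) (rankS n.*2.+2) {2}/free /= odd_double /=; lia.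
Qed.
Lemma exP n : exists q, n < rank q.+1.
Proof. by exists (n.*2.+1); apply: rank_big. Qed.
Definition pos n := ex_minn (exP n).
Lemma pos_spec n : free (pos n) /\ rank (pos n) = n.
Proof.
rewrite /pos; case: ex_minnP => q Hq Hmin.
have Hle : rank q <= n.
  case: q Hq Hmin => [|q] Hq Hmin; first by [].
  rewrite leqNgt; apply/negP => H; by have := Hmin q H; rewrite ltnn.
move: Hq; rewrite rankS; case Hf: (free q) => /=; rewrite ?addn1 ?addn0 => Hq; last lia.
by split => //; lia.
Qed.
Lemma pos_rank p : free p -> pos (rank p) = p.
Proof. by move=> Hp; have [H1 H2] := pos_spec (rank p); apply: rank_inj. Qed.

Definition hiso (X : nat -> bool) p := if free p then X (rank p) else true.

Lemma nonfree_Q Z p : body Qt Z -> ~~ free p -> Z p = true.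
Proof.
move=> HZ; rewrite /free negb_or negbK => /andP [Ho Hk].
have Hp : p = (p./2).*2 by rewrite -{1}(odd_double_half p) (negbTE Ho).
by rewrite Hp; apply/(body_Qt Z).1 => //; apply/kbP.
Qed.

Lemma first_diff (A B : nat -> bool) : A <> B ->
  exists n, (forall m, m < n -> A m = B m) /\ A n != B n.
Proof.
move=> HAB; have Hex : exists n, A n != B n.
  apply: NNPP => H; apply: HAB; apply: functional_extensionality => n.
  by apply/eqP; apply: negbNE; apply/negP => Hn; apply: H; exists n.
case: (ex_minnP Hex) => n Hn Hmin; exists n; split => // m Hm.
by apply/eqP; apply: negbNE; apply/negP => H; have := Hmin m H; rewrite leqNgt Hm.
Qed.

Lemma lex_pointwise (A B : nat -> bool) : (forall p, A p -> B p) -> A <> B -> lexlt A B.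
Proof.
move=> Hle /first_diff [n [H1 H2]]; exists n; split => //.
by move: H2 (Hle n); case: (A n); case: (B n) => //= _ ->.
Qed.

Lemma lexlt_irr_min (A : nat -> bool) : ~ lexlt A (fun _ => false).
Proof. by case=> n [_ [_ H]]. Qed.

Lemma det X : forall c xs v, eval X c xs v -> forall v', eval X c xs v' -> v = v'
with dets X : forall gs xs ys, evals X gs xs ys -> forall ys', evals X gs xs ys' -> ys = ys'.
Proof.
- move=> c xs v H; destruct H => v' H'.
  + by inversion H'.
  + by inversion H'.
  + by inversion H'.
  + by inversion H'.
  + inversion H'; subst. have E := dets _ _ _ _ H _ H3; subst. exact: det _ _ _ _ H0 _ H6.
  + inversion H'; subst. exact: det _ _ _ _ H _ H4.
  + inversion H'; subst. have E := det _ _ _ _ H _ H6; subst. exact: det _ _ _ _ H0 _ H7.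
  + inversion H'; subst.
    case: (ltngtP y v') => Hyy //.
    * case: (H3 _ Hyy) => w Hw Hw0. by move: (det _ _ _ _ H _ Hw) Hw0 => <-.
    * case: (H0 _ Hyy) => w Hw Hw0. by move: (det _ _ _ _ Hw _ H2) Hw0 => ->.
- move=> gs xs ys H; destruct H => ys' H'.
  + by inversion H'.
  + inversion H'; subst. have E := det _ _ _ _ H _ H3; subst. by rewrite (dets _ _ _ _ H0 _ H6).
Qed.

Lemma free_double e : free (e.*2) = ~~ kb e.
Proof. by rewrite /free odd_double doubleK. Qed.

Lemma hiso_body X : body Qt (hiso X).
Proof. apply/body_Qt => e /kbP Hk; by rewrite /hiso free_double Hk. Qed.
Lemma hiso_pos X n : hiso X (pos n) = X n.
Proof. by have [H1 H2] := pos_spec n; rewrite /hiso H1 H2. Qed.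
Lemma hiso_inj X Y : hiso X = hiso Y -> X = Y.
Proof. move=> E; apply: functional_extensionality => n; by rewrite -(hiso_pos X) -(hiso_pos Y) E. Qed.
Lemma hiso_surj Z : body Qt Z -> hiso (fun n => Z (pos n)) = Z.
Proof.
move=> HZ; apply: functional_extensionality => p; rewrite /hiso.
case Hf: (free p); first by rewrite pos_rank.
by rewrite nonfree_Q // Hf.
Qed.
Lemma hiso_lex X Y : lexlt X Y <-> lexlt (hiso X) (hiso Y).
Proof.
split.
- case=> n [H1 [H2 H3]]; exists (pos n); rewrite !hiso_pos; split => // m Hm.
  rewrite /hiso; case Hf: (free m) => //; apply: H1.
  by have [_ <-] := pos_spec n; apply: rank_lt.
- case=> p [H1 [H2 H3]].
  have Hf : free p by move: H2; rewrite /hiso; case: (free p).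
  exists (rank p); move: H2 H3; rewrite /hiso Hf => H2 H3; split => // m Hm.
  have [Hfm Hr] := pos_spec m.
  have Hlt : pos m < p.
    rewrite ltnNge; apply/negP => Hle; have := rank_le Hle; rewrite Hr leqNgt Hm //.
  by have := H1 _ Hlt; rewrite !hiso_pos.
Qed.

Lemma diag c' : (forall e, eval X0 c' [:: e] (nat_of_bool (kb e))) -> False.
Proof.
move=> Hc'.
pose D := RMu (RComp c' [:: RProj 1]).
have Hone : forall y e0, kb e0 -> eval X0 (RComp c' [:: RProj 1]) [:: y; e0] 1.
  move=> y e0 Hk; apply: (@ev_comp _ _ _ _ [:: e0]).
    by constructor; [exact: (ev_proj X0 1 [:: y; e0]) | constructor].
  by have := Hc' e0; rewrite Hk.
have Hzero : forall e0, kb e0 = false -> eval X0 D [:: e0] 0.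
  move=> e0 Hk; apply: ev_mu => //.
  apply: (@ev_comp _ _ _ _ [:: e0]).
    by constructor; [exact: (ev_proj X0 1 [:: 0; e0]) | constructor].
  by have := Hc' e0; rewrite Hk.
have Hno : forall e0 y, kb e0 -> eval X0 D [:: e0] y -> False.
  move=> e0 y Hk Hy; inversion Hy; subst.
  by have := det H0 (Hone _ _ Hk).
have Hsd := fun t (Ht : Kt t (enc D)) => Kt_sound Ht (erefl (enc D)).
have Hcd := @Kt_complete D.
move: Hsd Hcd; move: (enc D) => e0 Hsd Hcd.
case Hk: (kb e0).
- have Hk' := Hk; case/kbP: Hk' => t Ht; case: (Hsd t Ht) => y Hy; exact: (Hno _ _ Hk Hy).
- move: (Hcd _ (Hzero _ Hk)) => HK.
  by move/kbP: HK; rewrite Hk.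
Qed.

Theorem lemma3p4 :
  exists P Q : pred (seq bool),
    [/\ is_tree P /\ is_tree Q, computable_tree P /\ computable_tree Q,
        (exists h, order_iso P Q h) &
        ~ (exists h, order_iso P Q h /\ computable_map P h)].
Proof.
exists (fun _ => true), Qt; split.
- by split; [by [] | exact: Qt_tree].
- split; first by exists (cmp (PSuc PZero)) => s; exact: (cmp_ok _ (PSuc PZero) [:: encode s]).
  by exists (cmp QT) => s; rewrite -den_QT; exact: cmp_ok.
- exists hiso; split.
  + by move=> X _; exact: hiso_body.
  + by move=> X Y _ _; exact: hiso_inj.
  + by move=> Y HY; exists (fun n => Y (pos n)) => //; exact: hiso_surj.
  + by move=> X Y _ _; exact: hiso_lex.
- case=> h [[Hb Hinj Hsurj Hlex] [c Hc]].
  pose Y0 := fun p => ~~ free p.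
  have HY0 : body Qt Y0 by apply/body_Qt => e /kbP Hk; rewrite /Y0 free_double Hk.
  have HX0 : body (fun _ : seq bool => true) X0 by [].
  have HhX0 : h X0 = Y0.
    case: (classic (h X0 = Y0)) => // Hne.
    have Hlt : lexlt Y0 (h X0).
      apply: lex_pointwise; last by move=> E; apply: Hne.
      by move=> p Hp; apply: nonfree_Q; [exact: Hb | exact: Hp].
    case: (Hsurj _ HY0) => X1 HX1 E1; rewrite -E1 in Hlt.
    by have := (Hlex _ _ HX1 HX0).2 Hlt => /lexlt_irr_min.
  have Hc0 := Hc X0 HX0; rewrite HhX0 in Hc0.
  pose c' := RComp c [:: cmp (app ADD [:: v 0; v 0])].
  have Hc' : forall e, eval X0 c' [:: e] (nat_of_bool (kb e)).
    move=> e; apply: (@ev_comp _ _ _ _ [:: e + e]).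
      constructor; last by constructor.
      by have := cmp_ok X0 (app ADD [:: v 0; v 0]) [:: e]; rewrite den_app /= den_ADD.
    by have := Hc0 (e + e); rewrite /Y0 addnn free_double negbK.
  exact: (diag Hc').
Qed.
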